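(* Let $(G,+)$ be an abelian group with identity $e$, let $\mathsf{Dgm}$ be the set of all half-open intervals $[q,r)\subset\mathbb{R}$ with $q<r$ together with all half-infinite intervals $[q,\infty)$, and let $\varepsilon\ge 0$. Let $X:\mathsf{Dgm}\to G$ be a constructible map and let $Y:\mathsf{Dgm}\to G$ be a finite map such that $X(I)=\sum_{J\in\mathsf{Dgm}:\,J\supseteq I}Y(J)$ for each $I\in\mathsf{Dgm}$. Then $$X\circ\mathsf{Grow}^\varepsilon(I)=\sum_{J\in\mathsf{Dgm}:\,J\supseteq I} \big(Y\circ \mathsf{Grow}^\varepsilon\big)(J)\quad\text{for each } I\in\mathsf{Dgm}.$$
   Context: For a finite set $S\subset\mathbb{R}$, a map $X:\mathsf{Dgm}\to G$ is $S$-constructible if for all $J\supseteq I$ in $\mathsf{Dgm}$ with $J\cap S=I\cap S$, $X(I)=X(J)$; $X$ is constructible if it is $S$-constructible for some finite $S$. For $S=\{s_1<\dots<s_n\}$, a map $Y$ is $S$-finite if $Y(I)\ne e$ implies $I=[s_i,s_j)$ or $I=[s_i,\infty)$; $Y$ is finite if it is $S$-finite for some finite $S$. The map $\mathsf{Grow}^\varepsilon:\mathsf{Dgm}\to\mathsf{Dgm}$ sends $[p,q)$ to $[p-\varepsilon,q+\varepsilon)$ and $[p,\infty)$ to $[p-\varepsilon,\infty)$. *)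

(* Defs.v *)
From HB Require Import structures.
From mathcomp Require Import all_boot all_order all_algebra.
From mathcomp Require Import all_classical all_reals.
Set Implicit Arguments. Unset Strict Implicit. Unset Printing Implicit Defensive.
Import Order.TTheory GRing.Theory Num.Theory.
Local Open Scope ring_scope.

(* An element of Dgm is encoded by (left endpoint, right endpoint) where the
   right endpoint is [Some r] for [q, r) (with q < r) and [None] for [q, oo). *)
Definition dgm_wf {R : realType} (x : R * option R) : bool :=
  if x.2 is Some r then x.1 < r else true.

Definition Dgm (R : realType) := {x : R * option R | dgm_wf x}.

Definition dgm_left {R : realType} (I : Dgm R) : R := (val I).1.
Definition dgm_right {R : realType} (I : Dgm R) : option R := (val I).2.

Definition dgm_mem {R : realType} (I : Dgm R) (x : R) : bool :=
  (dgm_left I <= x) && (if dgm_right I is Some r then x < r else true).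

Definition dgm_sub {R : realType} (I J : Dgm R) : Prop :=
  forall x, dgm_mem I x -> dgm_mem J x.

Definition S_constructible {R : realType} {G : zmodType} (S : seq R)
    (X : Dgm R -> G) : Prop :=
  forall I J : Dgm R, dgm_sub I J ->
    (forall s, s \in S -> dgm_mem I s = dgm_mem J s) -> X I = X J.

Definition constructible {R : realType} {G : zmodType} (X : Dgm R -> G) : Prop :=
  exists S : seq R, S_constructible S X.

Definition S_finite {R : realType} {G : zmodType} (S : seq R)
    (Y : Dgm R -> G) : Prop :=
  forall I : Dgm R, Y I != 0 ->
    dgm_left I \in S /\ (if dgm_right I is Some r then r \in S else True).

Definition finite_map {R : realType} {G : zmodType} (Y : Dgm R -> G) : Prop :=
  exists S : seq R, S_finite S Y.

(* Grow^eps : [p,q) |-> [p-eps, q+eps), [p,oo) |-> [p-eps, oo).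
   (For eps >= 0 the result is always well formed; the default [I] of
   [insubd] is only used for eps < 0, which never occurs below.) *)
Definition grow {R : realType} (eps : R) (I : Dgm R) : Dgm R :=
  insubd I (dgm_left I - eps, omap (fun r => r + eps) (dgm_right I)).

Definition sum_supsets {R : realType} {G : zmodType} (F : Dgm R -> G)
    (I : Dgm R) : G :=
  (\sum_(J \in [set J : Dgm R | dgm_sub I J]) F J)%R.

(* Main.v *)
Require Import Defs.
From mathcomp Require Import all_boot all_order all_algebra.
From mathcomp Require Import all_classical all_reals.
From mathcomp Require Import lra.
Set Implicit Arguments. Unset Strict Implicit. Unset Printing Implicit Defensive.
Import Order.TTheory GRing.Theory Num.Theory.
Local Open Scope classical_set_scope.
Local Open Scope ring_scope.

Section S.
Variable R : realType.

Lemma wf_left (I : Dgm R) : dgm_mem I (dgm_left I).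
Proof.
case: I => [[a [b|]]] /= wf; rewrite /dgm_mem /dgm_left /dgm_right /= lexx //.
Qed.

Lemma subP (I J : Dgm R) : dgm_sub I J <->
  (dgm_left J <= dgm_left I /\
   match dgm_right J with None => True
   | Some d => exists b, dgm_right I = Some b /\ b <= d end).
Proof.
case: I => [[a oa]] /= wfI; case: J => [[c oc]] /= wfJ.
rewrite /dgm_sub /dgm_mem /dgm_left /dgm_right /=.
have ha : (if oa is Some r then a < r else true) = true by case: oa wfI.
split.
- move=> H; have := H a; rewrite lexx /= ha.
  move=> /(_ isT) /andP[ca _]; split => //.
  case: oc wfJ H => [d|] //= wfJ H.
  case: oa wfI ha H => [b|] /= wfI _ H; rewrite /dgm_wf /= in wfI wfJ.
  + exists b; split => //; rewrite leNgt; apply/negP => db.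
    have := H (Num.max a d); rewrite le_max lexx /= gt_max wfI db /=.
    by move=> /(_ isT) /andP[_]; rewrite gt_max ltxx andbF.
  + have := H (Num.max a d); rewrite le_max lexx /=.
    by move=> /(_ isT) /andP[_]; rewrite gt_max ltxx andbF.
- move=> [ca Hr] x /andP[ax xr]; rewrite (le_trans ca ax) /=.
  case: oc wfJ Hr => [d|] // wfJ [b [Eb bd]].
  by move: xr; rewrite Eb => xb; apply: lt_le_trans xb bd.
Qed.

Lemma growE (eps : R) (I : Dgm R) : 0 <= eps ->
  val (grow eps I) = (dgm_left I - eps, omap (fun r => r + eps) (dgm_right I)).
Proof.
move=> e0; rewrite /grow insubdK // /dgm_wf /=.
case: I => [[a [b|]]] //= wf; have := wf; rewrite /dgm_wf /= => h.
by rewrite unfold_in /dgm_left /=; lra.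
Qed.

Lemma grow_inj (eps : R) : 0 <= eps -> injective (grow eps).
Proof.
move=> e0 I J E; apply: val_inj; have := growE I e0; rewrite E growE //.
move: E => _.
case: I => [[a oa]] wfI; case: J => [[c oc]] wfJ.
rewrite /dgm_left /dgm_right /= => [[Eac Eo]].
have -> : a = c by lra.
case: oa oc Eo {wfI wfJ} => [b|] [d|] //= [Ebd].
by have -> : b = d by lra.
Qed.

Lemma grow_image (eps : R) (I : Dgm R) : 0 <= eps ->
  [set K | dgm_sub (grow eps I) K] = grow eps @` [set J | dgm_sub I J].
Proof.
move=> e0; apply/seteqP; split => K /=.
- move=> /subP []; rewrite /dgm_left /dgm_right growE //=.
  case: I => [[a oa]] wfI; case: K => [[c oc]] wfK /=.
  rewrite /dgm_left /dgm_right /= => ca Hr.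
  have wfJ : dgm_wf (c + eps, omap (fun r => r - eps) oc).
    case: oc wfK Hr => [d|] //= _ [b' [Eb bd]].
    case: oa wfI Eb => [b|] //= wfI [Eb]; rewrite /dgm_wf /= in wfI *; lra.
  exists (exist (fun x => dgm_wf x) _ wfJ : Dgm R).
    apply/subP; rewrite /dgm_left /dgm_right /=; split; first lra.
    case: oc wfK Hr wfJ => [d|] //= _ [b' [Eb bd]] _.
    case: oa wfI Eb => [b|] //= wfI [Eb]; exists b; split => //; lra.
  apply: val_inj; rewrite growE //= /dgm_left /dgm_right /=.
  congr pair; first lra.
  by case: (oc) => //= d; congr Some; lra.
- move=> [J /subP [HJl HJr] <-]; apply/subP.
  rewrite /dgm_left /dgm_right !growE //=.
  move: HJl HJr; rewrite /dgm_left /dgm_right.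
  split; first lra.
  case: (val J).2 HJr => //= d [b [-> bd]]; exists (b + eps); split => //; lra.
Qed.

End S.

Theorem proposition5p1 (R : realType) (G : zmodType) (eps : R)
    (X Y : Dgm R -> G) :
  0 <= eps ->
  constructible X ->
  finite_map Y ->
  (forall I : Dgm R, X I = sum_supsets Y I) ->
  forall I : Dgm R, X (grow eps I) = sum_supsets (fun J => Y (grow eps J)) I.
Proof.
move=> e0 _ _ HX I; rewrite HX /sum_supsets grow_image //.
rewrite fsbig_image //; move=> x y _ _; exact: grow_inj.
Qed.
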